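(* For a metrizable topological group $G$, $G$ is NSS if and only if $G$ is STAP.
   Context: A topological group $G$ with neutral element $e$ is NSS if some neighborhood of $e$ contains no nontrivial subgroup of $G$. A sequence $(g_n)$ in $G$ is hyper-converging if $g_n^{m_n}\to e$ for every integer sequence $(m_n)$. $G$ is STAP if no sequence of pairwise distinct elements of $G$ is hyper-converging. *)

(* Defs.v *)
From Stdlib Require Import Reals ZArith Arith.
Open Scope R_scope.

Record TopGroup : Type := {
  carrier :> Type;
  mul : carrier -> carrier -> carrier;
  inv : carrier -> carrier;
  one : carrier;
  mul_assoc : forall x y z, mul x (mul y z) = mul (mul x y) z;
  mul_one_l : forall x, mul one x = x;
  mul_inv_l : forall x, mul (inv x) x = one;
  is_open : (carrier -> Prop) -> Prop;
  open_full : is_open (fun _ => True);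
  open_inter : forall U V, is_open U -> is_open V -> is_open (fun x => U x /\ V x);
  open_union : forall (F : (carrier -> Prop) -> Prop),
      (forall U, F U -> is_open U) -> is_open (fun x => exists U, F U /\ U x);
  mul_continuous : forall x y (W : carrier -> Prop), is_open W -> W (mul x y) ->
      exists U V : carrier -> Prop, is_open U /\ is_open V /\ U x /\ V y /\
        (forall a b, U a -> V b -> W (mul a b));
  inv_continuous : forall x (W : carrier -> Prop), is_open W -> W (inv x) ->
      exists U : carrier -> Prop, is_open U /\ U x /\ (forall a, U a -> W (inv a))
}.

Arguments mul {t}. Arguments inv {t}. Arguments one {t}. Arguments is_open {t}.

Definition metrizable (G : TopGroup) : Prop :=
  exists d : G -> G -> R,
    (forall x y, d x y = 0 <-> x = y) /\
    (forall x y, d x y = d y x) /\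
    (forall x y z, d x z <= d x y + d y z) /\
    (forall U : G -> Prop, is_open U <->
       (forall x, U x -> exists eps, eps > 0 /\ forall y, d x y < eps -> U y)).

Fixpoint npow {G : TopGroup} (g : G) (n : nat) : G :=
  match n with
  | O => one
  | S k => mul g (npow g k)
  end.

Definition zpow {G : TopGroup} (g : G) (m : Z) : G :=
  match m with
  | Z0 => one
  | Zpos p => npow g (Pos.to_nat p)
  | Zneg p => inv (npow g (Pos.to_nat p))
  end.

Definition neighborhood {G : TopGroup} (N : G -> Prop) (x : G) : Prop :=
  exists U : G -> Prop, is_open U /\ U x /\ (forall y, U y -> N y).

Definition is_subgroup {G : TopGroup} (H : G -> Prop) : Prop :=
  H one /\ (forall x y, H x -> H y -> H (mul x y)) /\ (forall x, H x -> H (inv x)).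

Definition nontrivial {G : TopGroup} (H : G -> Prop) : Prop :=
  exists h, H h /\ h <> one.

Definition NSS (G : TopGroup) : Prop :=
  exists N : G -> Prop, neighborhood N one /\
    forall H : G -> Prop, is_subgroup H -> (forall h, H h -> N h) -> ~ nontrivial H.

Definition converges {G : TopGroup} (s : nat -> G) (x : G) : Prop :=
  forall U : G -> Prop, is_open U -> U x ->
    exists N : nat, forall n, (N <= n)%nat -> U (s n).

Definition hyper_converging {G : TopGroup} (g : nat -> G) : Prop :=
  forall m : nat -> Z, converges (fun n => zpow (g n) (m n)) one.

Definition STAP (G : TopGroup) : Prop :=
  ~ exists g : nat -> G, (forall i j, i <> j -> g i <> g j) /\ hyper_converging g.

(* Main.v *)
Require Import Defs.
From Stdlib Require Import Reals Lra Lia ZArith Arith Classical ClassicalEpsilon.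
Open Scope R_scope.

Section Grp.
Variable G : TopGroup.

Lemma mul_inv_r (x : G) : mul x (inv x) = one.
Proof.
  rewrite <- (mul_one_l G (mul x (inv x))).
  rewrite <- (mul_inv_l G (inv x)) at 1.
  rewrite <- mul_assoc. rewrite (mul_assoc G (inv x) x (inv x)), (mul_inv_l G x), mul_one_l.
  apply mul_inv_l.
Qed.

Lemma mul_one_r (x : G) : mul x one = x.
Proof.
  rewrite <- (mul_inv_l G x), mul_assoc, mul_inv_r. apply mul_one_l.
Qed.

Lemma inv_unique (a b : G) : mul a b = one -> a = inv b.
Proof.
  intro H. rewrite <- (mul_one_r a), <- (mul_inv_r b), mul_assoc, H. apply mul_one_l.
Qed.

Lemma inv_inv (x : G) : inv (inv x) = x.
Proof. symmetry. apply inv_unique. apply mul_inv_r. Qed.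

Lemma inv_mul (x y : G) : inv (mul x y) = mul (inv y) (inv x).
Proof.
  symmetry. apply inv_unique.
  rewrite <- mul_assoc, (mul_assoc G (inv x) x y), mul_inv_l, mul_one_l. apply mul_inv_l.
Qed.

Lemma inv_one : inv (@one G) = one.
Proof. symmetry; apply inv_unique. apply mul_one_l. Qed.

Lemma npow_succ_r (g : G) n : npow g (S n) = mul (npow g n) g.
Proof.
  induction n as [|n IH].
  - simpl. rewrite mul_one_r, mul_one_l. reflexivity.
  - change (npow g (S (S n))) with (mul g (npow g (S n))).
    rewrite IH at 1. exact (mul_assoc _ _ _ _).
Qed.

Lemma zpow_succ (g : G) a : zpow g (Z.succ a) = mul g (zpow g a).
Proof.
  destruct a as [|p|p].
  - simpl. reflexivity.
  - rewrite <- Pos2Z.inj_succ. unfold zpow. rewrite Pos2Nat.inj_succ. reflexivity.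
  - destruct (Pos.succ_pred_or p) as [E|E].
    + subst p. simpl. rewrite mul_one_r, mul_inv_r. reflexivity.
    + rewrite <- E. replace (Z.succ (Zneg (Pos.succ (Pos.pred p)))) with (Zneg (Pos.pred p)) by lia.
      unfold zpow. rewrite Pos2Nat.inj_succ, npow_succ_r, inv_mul, mul_assoc, mul_inv_r, mul_one_l.
      reflexivity.
Qed.

Lemma zpow_pred (g : G) a : zpow g (Z.pred a) = mul (inv g) (zpow g a).
Proof.
  rewrite <- (Z.succ_pred a) at 2. rewrite zpow_succ, mul_assoc, mul_inv_l, mul_one_l.
  reflexivity.
Qed.

Lemma zpow_add (g : G) a b : zpow g (a + b) = mul (zpow g a) (zpow g b).
Proof.
  induction a using Z.peano_ind.
  - simpl. rewrite mul_one_l. reflexivity.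
  - rewrite Z.add_succ_l, !zpow_succ, IHa, mul_assoc. reflexivity.
  - rewrite Z.add_pred_l, !zpow_pred, IHa, mul_assoc. reflexivity.
Qed.

Lemma zpow_opp (g : G) a : zpow g (- a) = inv (zpow g a).
Proof.
  destruct a as [|p|p]; simpl.
  - rewrite inv_one. reflexivity.
  - reflexivity.
  - rewrite inv_inv. reflexivity.
Qed.

Lemma zpow_1 (g : G) : zpow g 1 = g.
Proof. simpl. apply mul_one_r. Qed.

Lemma zpow_in (H : G -> Prop) (h : G) m : is_subgroup H -> H h -> H (zpow h m).
Proof.
  intros [H1 [Hm Hi]] Hh.
  assert (Hn : forall n, H (npow h n)).
  { induction n; simpl; auto. }
  destruct m; simpl; auto.
Qed.

Lemma cyclic_subgroup (g : G) : is_subgroup (fun x => exists m, x = zpow g m).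
Proof.
  split; [|split].
  - exists 0%Z. reflexivity.
  - intros x y [a ->] [b ->]. exists (a + b)%Z. symmetry; apply zpow_add.
  - intros x [a ->]. exists (- a)%Z. symmetry; apply zpow_opp.
Qed.

End Grp.

Fixpoint rseq {G : TopGroup} (d : G -> G -> R) (f : R -> G) (k : nat) : R :=
  match k with
  | O => 1
  | S k => Rmin (rseq d f k / 2) (d one (f (rseq d f k)))
  end.

Lemma nss_stap (G : TopGroup) : NSS G -> STAP G.
Proof.
  intros [N [[U [HU [HU1 HUN]]] HN]] [g [Hinj Hhyp]].
  assert (Hex : forall n, exists m, g n <> one -> ~ U (zpow (g n) m)).
  { intro n. destruct (classic (g n = one)) as [E|E].
    - exists 0%Z. tauto.
    - assert (Hnot : ~ (forall h, (exists m, h = zpow (g n) m) -> N h)).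
      { intro Hall. apply (HN _ (cyclic_subgroup G (g n)) Hall).
        exists (g n). split; auto. exists 1%Z. symmetry; apply zpow_1. }
      apply not_all_ex_not in Hnot. destruct Hnot as [h Hh].
      apply imply_to_and in Hh. destruct Hh as [[m ->] Hm].
      exists m. intros _ Hu. apply Hm, HUN, Hu. }
  set (m := fun n => proj1_sig (constructive_indefinite_description _ (Hex n))).
  assert (Hm : forall n, g n <> one -> ~ U (zpow (g n) (m n))).
  { intro n. exact (proj2_sig (constructive_indefinite_description _ (Hex n))). }
  destruct (Hhyp m U HU HU1) as [K HK].
  destruct (classic (g K = one)) as [E|E].
  - assert (E' : g (S K) <> one).
    { intro E2. apply (Hinj K (S K)); [lia|]. congruence. }
    apply (Hm _ E'). apply HK. lia.
  - apply (Hm _ E). apply HK. lia.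
Qed.

Lemma stap_nss (G : TopGroup) (hG : metrizable G) : STAP G -> NSS G.
Proof.
  destruct hG as [d [Hd [Hsym [Htri Hop]]]].
  intro HS. apply NNPP. intro Hn.
  assert (Hd0 : forall x, d x x = 0) by (intro x; apply Hd; reflexivity).
  assert (Hpos : forall x y, 0 <= d x y).
  { intros x y. pose proof (Htri x y x). rewrite Hd0, (Hsym y x) in H. lra. }
  assert (Hball : forall eps, is_open (fun x : G => d one x < eps)).
  { intro eps. apply Hop. intros x Hx. exists (eps - d one x). split; [lra|].
    intros y Hy. pose proof (Htri one x y). lra. }
  assert (Hex : forall eps, exists h : G, eps > 0 -> h <> one /\ forall m, d one (zpow h m) < eps).
  { intro eps. destruct (Rlt_dec 0 eps) as [Hp|Hp].
    - apply NNPP. intro Hno. apply Hn. exists (fun x => d one x < eps). split.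
      + exists (fun x => d one x < eps). split; [apply Hball|]. split; auto.
        rewrite Hd0. lra.
      + intros H Hsub Hin [h [Hh hne]]. apply Hno. exists h. intros _. split; auto.
        intro m. apply Hin. apply zpow_in; auto.
    - exists one. intro; lra. }
  set (f := fun eps => proj1_sig (constructive_indefinite_description _ (Hex eps))).
  assert (Hf : forall eps, eps > 0 -> f eps <> one /\ forall m, d one (zpow (f eps) m) < eps).
  { intro eps. exact (proj2_sig (constructive_indefinite_description _ (Hex eps))). }
  assert (Hf1 : forall eps, eps > 0 -> 0 < d one (f eps) < eps).
  { intros eps He. destruct (Hf eps He) as [Hne Hlt]. specialize (Hlt 1%Z).
    rewrite zpow_1 in Hlt. split; auto.
    destruct (Hpos one (f eps)) as [Hp|Hp]; auto.
    exfalso. apply Hne. symmetry. apply Hd. auto. }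
  set (r := rseq d f).
  set (g := fun k => f (r k)).
  assert (Hr : forall k, r k > 0).
  { induction k; unfold r in *; simpl; [lra|].
    apply Rmin_glb_lt; [lra|]. apply Hf1; auto. }
  assert (Hdec : forall k, d one (g (S k)) < d one (g k)).
  { intro k. unfold g. destruct (Hf1 (r (S k)) (Hr (S k))) as [_ H1].
    assert (r (S k) <= d one (f (r k))) by (unfold r; simpl; apply Rmin_r).
    lra. }
  assert (Hdec2 : forall i k, d one (g (S k + i)%nat) < d one (g i)).
  { intros i k. induction k.
    - apply Hdec.
    - pose proof (Hdec (S k + i)%nat). simpl in *. lra. }
  assert (Hrb : forall k, r k <= (/2) ^ k).
  { induction k; unfold r in *; simpl; [lra|].
    pose proof (Rmin_l (rseq d f k / 2) (d one (f (rseq d f k)))). lra. }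
  apply HS. exists g. split.
  - intros i j Hij E.
    destruct (Nat.lt_total i j) as [Hl|[Hl|Hl]]; [|contradiction|].
    + pose proof (Hdec2 i (j - S i)%nat).
      replace (S (j - S i) + i)%nat with j in H by lia. rewrite E in H. lra.
    + pose proof (Hdec2 j (i - S j)%nat).
      replace (S (i - S j) + j)%nat with i in H by lia. rewrite E in H. lra.
  - intros m U HU HU1.
    destruct (proj1 (Hop U) HU one HU1) as [eps [He Heps]].
    assert (Habs : Rabs (/2) < 1) by (rewrite Rabs_right; lra).
    destruct (pow_lt_1_zero (/2) Habs eps He) as [N HN].
    exists N. intros n Hnn. apply Heps.
    pose proof (HN n Hnn). pose proof (Rle_abs ((/2)^n)).
    pose proof (Hrb n). destruct (Hf (r n) (Hr n)) as [_ Hl].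
    specialize (Hl (m n)). unfold g. lra.
Qed.

Theorem theorem5p3 (G : TopGroup) (hG : metrizable G) : NSS G <-> STAP G.
Proof.
  split; [apply nss_stap | apply stap_nss; exact hG].
Qed.
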